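(* Consider the system model in the context with a line-of-sight-only channel $\mathbf{h}_k=\alpha_k\mathbf{a}(\theta_k)$, where $\alpha_k\in\mathbb{C}\setminus\{0\}$ and $\theta_k\in[0,2\pi)$. For $\phi\in[-\pi,\pi)$ let $\gamma(\alpha_k\mathbf{a}(\phi),\mathbf{F}_k,\mathbf{y}_k)$ be the SINR function defined in the context. Then the function $\phi\mapsto\gamma(\alpha_k\mathbf{a}(\phi),\mathbf{F}_k,\mathbf{y}_k)$ attains its maximum over $[-\pi,\pi)$, and every global maximizer $$\phi^\star\in\arg\max_{\phi\in[-\pi,\pi)}\gamma(\alpha_k\mathbf{a}(\phi),\mathbf{F}_k,\mathbf{y}_k)$$ satisfies $\mathbf{a}(\phi^\star)=\mathbf{a}(\theta_k)$.
   Context: Let $N\ge 2$, $p_{\rm t}>0$, $\sigma^2>0$, and fix $k\in\{1,\dots,N\}$. The array response vector is $\mathbf{a}(\theta)=(1,e^{j\pi\sin\theta},\dots,e^{j\pi(N-1)\sin\theta})^{\mathsf T}\in\mathbb{C}^N$. $\mathbf{U}_N$ is the normalized DFT matrix, $\mathbf{U}_N(a,b)=\frac{1}{\sqrt N}e^{-j2\pi(a-1)(b-1)/N}$; $\mathbf{C}_N(i,k)=((i-k)\bmod N)+1$; and for $k'\in\{1,\dots,N\}$, $\mathbf{F}_{k'}$ is the matrix whose $n$-th column $\mathbf{p}_{[n,k']}$ is the $\mathbf{C}_N(n,k')$-th column of $\mathbf{U}_N$. For $n\in\{1,\dots,N\}$, $\mathbf{P}_n$ is the matrix whose $k'$-th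 column is $\mathbf{p}_{[n,k']}$. A symbol vector $\mathbf{s}\in\mathbb{C}^N$ with $\mathbb{E}[\mathbf{s}\mathbf{s}^{\mathsf H}]=\mathbf{I}_N$ is sent with $\mathbf{x}_n=\frac{1}{\sqrt N}\mathbf{P}_n\mathbf{s}$; device $k$ receives $\mathbf{y}_k=(y_{[1,k]},\dots,y_{[N,k]})^{\mathsf T}$ with $y_{[n,k]}=\sqrt{p_{\rm t}}\mathbf{h}_k^{\mathsf H}\mathbf{x}_n+z_{[n,k]}$, so that $\mathbf{y}_k=\sqrt{p_{\rm t}/N}\sum_{k'=1}^N\mathbf{s}(k')\mathbf{F}_{k'}^{\mathsf T}\mathbf{h}_k^{*}+\mathbf{z}_k$, where $\mathbf{z}_k$ is independent of $\mathbf{s}$, zero mean, with $\mathbb{E}[\mathbf{z}_k\mathbf{z}_k^{\mathsf H}]=\sigma^2\mathbf{I}_N$. For a candidate channel $\mathbf{h}\in\mathbb{C}^N$ with all entries nonzero, let $\tilde{\mathbf{h}}=\mathbf{1}_N\oslash(\mathbf{h}^* )$ (entrywise division), $g(\mathbf{h})=\tilde{\mathbf{h}}^{\mathsf T}\mathbf{F}_k^*\mathbf{F}_k^{\mathsf T}\mathbf{h}_k^*$, $v_{k'}(\mathbf{h})=\tilde{\mathbf{h}}^{\mathsf T}\mathbf{F}_k^*\mathbf{F}_{k'}^{\mathsf T}\mathbf{h}_k^*$, so that the combined signal $\tilde{\mathbf{h}}^{\mathsf T}\mathbf{F}_k^*\mathbf{y}_k=P+I$ with $P=\sqrt{p_{\rm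 t}/N}\,\mathbf{s}(k)g(\mathbf{h})$ and $I=\sqrt{p_{\rm t}/N}\sum_{k'\neq k}\mathbf{s}(k')v_{k'}(\mathbf{h})+\tilde{\mathbf{h}}^{\mathsf T}\mathbf{F}_k^*\mathbf{z}_k$. The SINR is $\gamma(\mathbf{h},\mathbf{F}_k,\mathbf{y}_k)=\mathbb{E}[|P|^2]/\mathbb{E}[|I|^2]$, expectations over $\mathbf{s}$ and $\mathbf{z}_k$. *)

(* Defs.v *)
(* R : realType (mathcomp-analysis trigo), complex numbers
   R[i] from mathcomp-real-closed.  All indices are 0-based: the paper's
   index n in {1..N} is our n-1 in 'I_N. *)
From mathcomp Require Import all_boot all_algebra.
From mathcomp Require Import reals trigo.
From mathcomp Require Import complex.
Set Implicit Arguments. Unset Strict Implicit. Unset Printing Implicit Defensive.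
Import GRing.Theory Num.Theory.
Local Open Scope ring_scope.
Local Open Scope complex_scope.

Section Model.
Variable R : realType.
Local Notation C := R[i].

Definition expj (x : R) : C := cos x +i* sin x.

Definition cconj m n (A : 'M[C]_(m, n)) : 'M[C]_(m, n) := map_mx (fun x => x^*) A.

Variable N : nat.

Definition steer (th : R) : 'cV[C]_N :=
  \col_(n < N) expj (pi * n%:R * sin th).

Definition dft_entry (a b : nat) : C :=
  ((Num.sqrt (N%:R : R))^-1)%:C * expj (- (2 * pi * (a * b)%:R / N%:R)).

(* 0-based version of C_N(i,k) = ((i-k) mod N) + 1 : column index (i-k) mod N *)
Definition cidx (i k : nat) : nat := ((i + N - k) %% N)%N.

Definition pvec (n k' : nat) : 'cV[C]_N := \col_(a < N) dft_entry a (cidx n k').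

Definition Fmat (k' : 'I_N) : 'M[C]_N := \matrix_(a < N, n < N) pvec n k' a 0.

Definition Pmat (n : 'I_N) : 'M[C]_N := \matrix_(a < N, k' < N) pvec n k' a 0.

Variables (k : 'I_N) (pt : R).

Definition htil (h : 'cV[C]_N) : 'cV[C]_N := \col_(a < N) (h a 0)^*^-1.

Definition gval (h hk : 'cV[C]_N) : C :=
  ((htil h)^T *m cconj (Fmat k) *m (Fmat k)^T *m cconj hk) 0 0.

Definition vval (h hk : 'cV[C]_N) (k' : 'I_N) : C :=
  ((htil h)^T *m cconj (Fmat k) *m (Fmat k')^T *m cconj hk) 0 0.

Definition wrow (h : 'cV[C]_N) : 'rV[C]_N := (htil h)^T *m cconj (Fmat k).

(* E|P|^2 where P = sqrt(pt/N) s(k) g(h), for a symbol vector with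
   second-moment matrix E[s s^H] = Cs :  (pt/N) g Cs(k,k) g^* *)
Definition powP (Cs : 'M[C]_N) (h hk : 'cV[C]_N) : R :=
  complex.Re (((pt / N%:R)%:C) * (gval h hk * Cs k k * (gval h hk)^*)).

(* E|I|^2 where I = sqrt(pt/N) sum_{k'<>k} s(k') v_{k'}(h) + w z, with
   E[s s^H] = Cs, E[z z^H] = Cz, z independent of s and zero mean
   (so the cross terms vanish):
   (pt/N) sum_{k1,k2 <> k} v_{k1} Cs(k1,k2) v_{k2}^*  +  w Cz w^H *)
Definition powI (Cs Cz : 'M[C]_N) (h hk : 'cV[C]_N) : R :=
  complex.Re (((pt / N%:R)%:C) *
      (\sum_(k1 < N | k1 != k) \sum_(k2 < N | k2 != k)
          vval h hk k1 * Cs k1 k2 * (vval h hk k2)^*)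
    + (wrow h *m Cz *m (cconj (wrow h))^T) 0 0).

Variable sigma2 : R.

(* SINR gamma(h, F_k, y_k) = E|P|^2 / E|I|^2 with E[s s^H] = I_N and
   E[z_k z_k^H] = sigma^2 I_N *)
Definition sinr (h hk : 'cV[C]_N) : R :=
  powP 1%:M h hk / powI 1%:M (sigma2%:C)%:M h hk.

End Model.

(* Main.v *)
Require Import Defs.
From mathcomp Require Import all_boot all_order all_algebra.
From mathcomp Require Import reals trigo.
From mathcomp Require Import complex.
From mathcomp Require Import ring lra zify.
Import Order.TTheory GRing.Theory Num.Theory.
Local Open Scope ring_scope.

Lemma frac_le (R : realFieldType) (p K S G M : R) : 0 < p -> 0 < K -> 0 <= S -> G <= M -> 0 <= M ->
  p * G / (p * S + K) <= p * M / K.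
Proof.
move=> p0 K0 S0 GM M0.
have hd : 0 < p * S + K by nra.
rewrite ler_pdivrMr // mulrAC ler_pdivlMr //.
have h1 : p * G * K <= p * M * K by rewrite ler_pM2r // ler_pM2l.
have h2 : 0 <= p * M * (p * S) by apply: mulr_ge0; apply: mulr_ge0 => //; apply: ltW.
apply: (le_trans h1); rewrite mulrDr lerDr //.
Qed.
Lemma frac_eq (R : realFieldType) (p K S G M : R) : 0 < p -> 0 < K -> 0 <= S -> G <= M -> 0 <= M ->
  p * M / K <= p * G / (p * S + K) -> G = M.
Proof.
move=> p0 K0 S0 GM M0.
have hd : 0 < p * S + K by nra.
rewrite ler_pdivlMr // mulrAC ler_pdivrMr // => H.
apply/eqP; rewrite eq_le GM /=.
have h2 : 0 <= p * M * (p * S) by apply: mulr_ge0; apply: mulr_ge0 => //; apply: ltW.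
have h4 : p * M * K <= p * G * K.
  by apply: le_trans H; rewrite mulrDr lerDr.
by move: h4; rewrite ler_pM2r // ler_pM2l.
Qed.

Section Basic.
Local Open Scope complex_scope.
Local Open Scope ring_scope.
Variable R : realType.
Local Notation C := R[i].

Lemma expjD (x y : R) : expj (x + y) = expj x * expj y.
Proof. rewrite /expj cosD sinD /=. congr (_ +i* _)%C; ring. Qed.

Lemma expj0 : expj (0 : R) = 1.
Proof. by rewrite /expj cos0 sin0. Qed.

Lemma expjN (x : R) : expj (- x) = (expj x)^*.
Proof. by rewrite /expj cosN sinN. Qed.

Lemma expjJ (x : R) : expj x * (expj x)^* = 1.
Proof.
rewrite /expj /=; apply/eqP; rewrite eq_complex /=; apply/andP; split; apply/eqP.
  by rewrite -(cos2Dsin2 x); ring.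
by ring.
Qed.

Lemma conjcM (x y : C) : (x * y)^* = x^* * y^*.
Proof. by case: x => a b; case: y => c d /=; congr (_ +i* _)%C; ring. Qed.

Lemma expjMn (x : R) n : expj (x * n%:R) = expj x ^+ n.
Proof.
elim: n => [|n IH]; first by rewrite mulr0 expj0 expr0.
by rewrite mulrS mulrDr mulr1 expjD IH exprS.
Qed.

Lemma expj2pi : expj (2 * pi : R) = 1.
Proof. by rewrite /expj mulr_natl cos2pi sin2pi. Qed.

Lemma expj_neq1 (y : R) : 0 < y < 2 * pi -> expj y != 1.
Proof.
case/andP=> y0 y2; apply/negP => /eqP H.
have hs : sin y = 0 by move: H; rewrite /expj => -[].
have hc : cos y = 1 by move: H; rewrite /expj => -[].
have [ylt|ygt|yeq] := ltrgtP y pi.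
- by move: (@sin_gt0_pi R y); rewrite y0 ylt hs ltxx => /(_ isT).
- have h1 : 0 < sin (y - pi) by apply: sin_gt0_pi; apply/andP; split; lra.
  have : sin (y - pi + pi) = - sin (y - pi) by apply: sinDpi.
  rewrite subrK hs => /eqP; rewrite eq_sym oppr_eq0 => /eqP h2.
  by move: h1; rewrite h2 ltxx.
- move: hc; rewrite yeq cospi; lra.
Qed.

Lemma geo (z : C) n : (z - 1) * \sum_(i < n) z ^+ i = z ^+ n - 1.
Proof.
elim: n => [|n IH]; first by rewrite big_ord0 mulr0 expr0 subrr.
by rewrite big_ord_recr /= mulrDr IH exprS; ring.
Qed.


Variable N : nat.
Hypothesis N_gt0 : (0 < N)%N.

Definition om : C := expj (- (2 * pi / N%:R)).

Lemma N_neq0 : (N%:R : R) != 0.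
Proof. by rewrite pnatr_eq0 -lt0n. Qed.

Lemma omN : om ^+ N = 1.
Proof.
rewrite /om -expjMn mulNr divfK ?N_neq0 // expjN expj2pi.
by rewrite conjC1.
Qed.

Lemma om_mod m : om ^+ (m %% N) = om ^+ m.
Proof.
by rewrite {2}(divn_eq m N) exprD mulnC exprM omN expr1n mul1r.
Qed.

Lemma om_neq1 r : (0 < r < N)%N -> om ^+ r != 1.
Proof.
case/andP=> r0 rN.
rewrite /om -expjMn mulNr expjN; apply/negP => /eqP H.
have : expj (2 * pi / N%:R * r%:R : R) = 1 by rewrite -[expj _]conjCK H conjC1.
apply/eqP/expj_neq1; apply/andP; split.
  by apply: mulr_gt0; [apply: divr_gt0; [apply: mulr_gt0 => //; apply: pi_gt0|rewrite ltr0n]|rewrite ltr0n].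
rewrite mulrAC ltr_pdivrMr ?ltr0n //. 
rewrite ltr_pM2l; first by rewrite ltr_nat.
by apply: mulr_gt0 => //; apply: pi_gt0.
Qed.

Lemma sum_om d : \sum_(i < N) (om ^+ d) ^+ i = if (N %| d)%N then N%:R else 0.
Proof.
case: ifP => hd.
  have -> : om ^+ d = 1 by rewrite -om_mod (eqP hd) expr0.
  by under eq_bigr do rewrite expr1n; rewrite sumr_const card_ord.
have h1 : om ^+ d != 1.
  rewrite -om_mod; apply: om_neq1; rewrite ltn_mod N_gt0 andbT lt0n.
  by rewrite -/(dvdn N d) hd.
have := geo (om ^+ d) N; rewrite -exprM mulnC exprM omN expr1n subrr.
by move/eqP; rewrite mulf_eq0 subr_eq0 (negbTE h1) /= => /eqP.
Qed.

Lemma omJ : om^* = om ^+ (N - 1).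
Proof.
have h1 : om * om^* = 1 by apply: expjJ.
have h2 : om ^+ (N - 1) * om = 1 by rewrite -exprSr subn1 prednK // omN.
by rewrite -[LHS]mul1r -h2 -mulrA h1 mulr1.
Qed.

Lemma omXJ m : (om ^+ m)^* = om ^+ ((N - 1) * m).
Proof. rewrite exprM -omJ; exact: (rmorphXn Num.conj m om). Qed.


Lemma D1 (a b : nat) : (a < N)%N -> (b < N)%N -> (N %| (N - 1) * a + b)%N = (a == b).
Proof.
move=> aN bN; apply/idP/eqP => [hd|<-].
  have h1 : ((N - 1) * a + b + a = N * a + b)%N.
    rewrite -addnA [(b + a)%N]addnC addnA -{2}[a]mul1n -mulnDl subnK //.
  have : ((N * a + b) %% N = a %% N)%N.
    by rewrite -h1 -modnDml (eqP hd) add0n.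
  by rewrite mulnC modnMDl !modn_small.
have -> : ((N - 1) * a + a = N * a)%N by rewrite -{2}[a]mul1n -mulnDl subnK.
exact: dvdn_mulr.
Qed.

Lemma D2 (k k' : nat) : (k < N)%N -> (k' < N)%N ->
  (N %| (N - 1) * (N - k) + (N - k'))%N -> k = k'.
Proof.
move=> kN kN' hd.
have e1 : (N - k + k = N)%N by rewrite subnK ?N_gt0 // ltnW.
have e2 : (N - k' + k' = N)%N by rewrite subnK ?N_gt0 // ltnW.
have e3 : ((N - 1) * (N - k) + (N - k) = N * (N - k))%N.
  by rewrite -{2}[(N - k)%N]mul1n -mulnDl subnK.
have h1 : ((N - 1) * (N - k) + (N - k') + ((N - k) + k') = N * (N - k) + N)%N.
  rewrite -e3; lia.
have h3 : ((N * (N - k) + N) %% N = ((N - k) + k') %% N)%N.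
  by rewrite -h1 -modnDml (eqP hd) add0n.
have h2 : (((N - k) + k') %% N = ((N - k) + k) %% N)%N.
  by rewrite -h3 e1 mulnC modnMDl.
by move: h2 => /eqP; rewrite eqn_modDl !modn_small // => /eqP.
Qed.

Definition sN : C := ((Num.sqrt (N%:R : R))^-1)%:C.

Lemma sNJ : sN^* * sN = (N%:R^-1 : R)%:C.
Proof.
rewrite /sN /=; congr (_ +i* _)%C; last by ring.
rewrite oppr0 mulr0 subr0 -invfM -expr2 sqr_sqrtr //.
Qed.

Lemma FmatE (k a n : 'I_N) : Fmat R k a n = sN * om ^+ (a * (n + (N - k))).
Proof.
rewrite !mxE /dft_entry /cidx; congr (_ * _).
rewrite -[(2 * pi * _ / _)]mulrAC -mulNr expjMn -/(om).
rewrite mulnC exprM om_mod -exprM addnBA; last exact: ltnW.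
by rewrite mulnC.
Qed.

Lemma term_eq (x y : nat) :
  (sN * om ^+ x)^* * (sN * om ^+ y) = (N%:R^-1 : R)%:C * om ^+ ((N - 1) * x + y).
Proof. by rewrite conjcM omXJ -sNJ exprD; ring. Qed.

Lemma Qentry (k1 k2 a b : 'I_N) :
  (cconj (Fmat R k1) *m (Fmat R k2)^T) a b =
  if a == b then om ^+ ((N - 1) * (a * (N - k1)) + a * (N - k2)) else 0.
Proof.
rewrite mxE.
have term (n : 'I_N) : cconj (Fmat R k1) a n * (Fmat R k2)^T n b =
    (N%:R^-1 : R)%:C * (om ^+ ((N - 1) * (a * (N - k1)) + b * (N - k2)) *
       (om ^+ ((N - 1) * a + b)) ^+ n).
  have h1 : cconj (Fmat R k1) a n = (Fmat R k1 a n)^* by rewrite /cconj mxE.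
  have h2 : (Fmat R k2)^T n b = Fmat R k2 b n by rewrite mxE.
  rewrite h1 h2 !FmatE term_eq; congr (_ * _).
  rewrite -exprM -exprD; f_equal; lia.
rewrite (eq_bigr _ (fun n _ => term n)) -mulr_sumr -mulr_sumr sum_om D1 //.
have [ab|nab] := eqVneq a b.
  rewrite ab !eqxx.
  have NC : (N%:R : C) = (N%:R : R)%:C by rewrite rmorph_nat.
  by rewrite NC mulrCA -rmorphM mulVf ?N_neq0 // mulr1.
have nab' : (a : nat) != b by [].
by rewrite (negbTE nab') !mulr0.
Qed.


Lemma conj_num' (z : C) : conjc z = Num.conj z.
Proof. by []. Qed.

Lemma Qkk (k : 'I_N) : cconj (Fmat R k) *m (Fmat R k)^T = 1%:M.
Proof.
apply/matrixP => a b; rewrite Qentry mxE.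
case: eqP => // ->.
have -> : ((N - 1) * (b * (N - k)) + b * (N - k) = N * (b * (N - k)))%N.
  by rewrite -{2}[(b * (N - k))%N]mul1n -mulnDl subnK.
by rewrite exprM omN expr1n.
Qed.

Lemma cconjM m n p (A : 'M[C]_(m, n)) (B : 'M[C]_(n, p)) :
  cconj (A *m B) = cconj A *m cconj B.
Proof.
apply/matrixP => i j; rewrite !mxE /= rmorph_sum; apply: eq_bigr => l _.
by rewrite !mxE rmorphM.
Qed.

Lemma cconjK m n (A : 'M[C]_(m, n)) : cconj (cconj A) = A.
Proof. by apply/matrixP => i j; rewrite !mxE /= conjcK. Qed.

Lemma cconj_tr m n (A : 'M[C]_(m, n)) : cconj A^T = (cconj A)^T.
Proof. by apply/matrixP => i j; rewrite !mxE. Qed.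

Lemma trip (u c : 'cV[C]_N) (A B : 'M[C]_N) :
  (u^T *m A *m B *m c) 0 0 = \sum_a u a 0 * \sum_b (A *m B) a b * c b 0.
Proof.
rewrite -(mulmxA (u^T) A B) mxE.
under eq_bigr => b _ do rewrite mxE mulr_suml.
rewrite exchange_big; apply: eq_bigr => a _; rewrite mulr_sumr.
by apply: eq_bigr => b _; rewrite mxE mulrA.
Qed.

Lemma gvalE (k : 'I_N) (h hk : 'cV[C]_N) :
  gval k h hk = \sum_a htil h a 0 * cconj hk a 0.
Proof.
rewrite /gval -(mulmxA _ (cconj (Fmat R k))) Qkk mulmx1 mxE.
by apply: eq_bigr => a _; rewrite mxE.
Qed.

Lemma vvalE (k k' : 'I_N) (h hk : 'cV[C]_N) :
  vval k h hk k' = \sum_(a < N) htil h a 0 *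
     (om ^+ ((N - 1) * (a * (N - k)) + a * (N - k')) * cconj hk a 0).
Proof.
rewrite /vval trip; apply: eq_bigr => a _; congr (_ * _).
rewrite (bigD1 a) //= Qentry eqxx big1 ?addr0 // => b /negbTE ba.
by rewrite Qentry eq_sym ba mul0r.
Qed.

Lemma noiseE (k : 'I_N) (h : 'cV[C]_N) (s : R) :
  (wrow k h *m (s%:C)%:M *m (cconj (wrow k h))^T) 0 0 =
  s%:C * \sum_a htil h a 0 * (htil h a 0)^*.
Proof.
rewrite mul_mx_scalar -scalemxAl mxE; congr (_ * _).
rewrite /wrow cconjM cconjK trmx_mul -cconj_tr trmxK.
rewrite !mulmxA -(mulmxA _ (cconj (Fmat R k))) Qkk mulmx1 mxE.
by apply: eq_bigr => a _; rewrite !mxE.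
Qed.


Lemma expj_neq0 (y : R) : expj y != 0.
Proof.
apply/negP => /eqP H; have := expjJ y; rewrite H mul0r => /eqP.
by rewrite eq_sym oner_eq0.
Qed.

Lemma expjV (y : R) : (expj y)^-1 = expj (- y).
Proof.
apply: (@mulfI _ (expj y)); first exact: expj_neq0.
by rewrite mulfV ?expj_neq0 // -expjD subrr expj0.
Qed.

Lemma expjC (y : R) : (expj y)^* = expj (- y).
Proof. by rewrite expjN. Qed.

Lemma norm_expj (y : R) : `|expj y| = 1.
Proof.
apply/eqP; rewrite -sqrp_eq1 ?normr_ge0 // normCK; apply/eqP; exact: expjJ.
Qed.

Definition nrm2 (z : C) : R := complex.Re (z * z^*).

Lemma zzE (z : C) : z * z^* = (nrm2 z)%:C.
Proof. by case: z => a b; rewrite /nrm2 /=; congr (_ +i* _)%C; ring. Qed.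

Lemma nrm2_ge0 (z : C) : 0 <= nrm2 z.
Proof. by rewrite -lecR -zzE; exact: mulcJ_ge0. Qed.

Lemma nrm2_norm (z : C) : (nrm2 z)%:C = `|z| ^+ 2.
Proof. by rewrite -zzE normCK. Qed.

Lemma nrm2_0 : nrm2 0 = 0.
Proof. by rewrite /nrm2 mul0r. Qed.

Definition Pp (phi : R) (a : nat) : R := pi * a%:R * sin phi.

Variable alpha : C.
Hypothesis alpha_neq0 : alpha != 0.

Lemma steerE (phi : R) (a : 'I_N) : (alpha *: steer N phi) a 0 = alpha * expj (Pp phi a).
Proof. by rewrite !mxE. Qed.

Lemma ucE (phi th : R) (a : 'I_N) :
  htil (alpha *: steer N phi) a 0 * cconj (alpha *: steer N th) a 0 =
  expj (Pp phi a - Pp th a).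
Proof.
rewrite [htil _ _ _]mxE [cconj _ _ _]mxE /= conj_num' !steerE !conjcM !expjC.
rewrite invfM expjV opprK expjD.
have ha : alpha^* != 0 by rewrite conjC_eq0.
by rewrite mulrACA mulVf // mul1r.
Qed.

Lemma uuE (phi : R) (a : 'I_N) :
  htil (alpha *: steer N phi) a 0 * (htil (alpha *: steer N phi) a 0)^* =
  (alpha * alpha^*)^-1.
Proof.
rewrite [htil _ _ _]mxE steerE !conjcM !expjC fmorphV /= conjcM !expjC opprK conjCK.
rewrite -invfM; congr (_^-1).
by rewrite mulrACA -expjD addNr expj0 mulr1 mulrC.
Qed.


Lemma powPE (k : 'I_N) (pt : R) (h hk : 'cV[C]_N) :
  powP k pt 1%:M h hk = pt / N%:R * nrm2 (gval k h hk).
Proof. by rewrite /powP mxE eqxx mulr1 zzE -rmorphM. Qed.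

Lemma powIE (k : 'I_N) (pt s : R) (h hk : 'cV[C]_N) :
  powI k pt 1%:M (s%:C)%:M h hk =
  pt / N%:R * \sum_(k' < N | k' != k) nrm2 (vval k h hk k') +
  s * \sum_a nrm2 (htil h a 0).
Proof.
rewrite /powI noiseE.
have -> : \sum_(k1 < N | k1 != k) \sum_(k2 < N | k2 != k)
     vval k h hk k1 * (1%:M : 'M[C]_N) k1 k2 * (vval k h hk k2)^* =
   ((\sum_(k' < N | k' != k) nrm2 (vval k h hk k')))%:C.
  rewrite rmorph_sum; apply: eq_bigr => k1 hk1.
  rewrite (bigD1 k1) //= mxE eqxx mulr1 zzE big1 ?addr0 // => k2 /andP[_ ne].
  by rewrite mxE eq_sym (negbTE ne) mulr0 mul0r.
have -> : \sum_a htil h a 0 * (htil h a 0)^* = (\sum_a nrm2 (htil h a 0))%:C.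
  by rewrite rmorph_sum; apply: eq_bigr => a _; rewrite zzE.
by rewrite -!rmorphM -rmorphD.
Qed.


Lemma gvalP (k : 'I_N) (phi th : R) :
  gval k (alpha *: steer N phi) (alpha *: steer N th) =
  \sum_(a < N) expj (Pp phi a - Pp th a).
Proof. by rewrite gvalE; apply: eq_bigr => a _; rewrite ucE. Qed.

Lemma sum_norm_x (phi th : R) :
  \sum_(a < N) `|expj (Pp phi a - Pp th a)| = (N%:R : C).
Proof.
under eq_bigr do rewrite norm_expj.
by rewrite sumr_const card_ord.
Qed.

Lemma G_le (k : 'I_N) (phi th : R) :
  nrm2 (gval k (alpha *: steer N phi) (alpha *: steer N th)) <= N%:R ^+ 2.
Proof.
rewrite -lecR nrm2_norm rmorphXn rmorph_nat gvalP.
have H : `|\sum_(a < N) expj (Pp phi a - Pp th a)| <= N%:R.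
  by rewrite -(sum_norm_x phi th); apply: ler_norm_sum.
by rewrite expr2 expr2; apply: ler_pM => //; apply: normr_ge0.
Qed.

Lemma Pp0 (phi : R) : Pp phi 0 = 0.
Proof. by rewrite /Pp mulr0 mul0r. Qed.

Lemma G_eq (k : 'I_N) (phi th : R) :
  nrm2 (gval k (alpha *: steer N phi) (alpha *: steer N th)) = N%:R ^+ 2 ->
  steer N phi = steer N th.
Proof.
move=> H.
have H1 : `|\sum_(a < N) expj (Pp phi a - Pp th a)| ^+ 2 = (N%:R : C) ^+ 2.
  by rewrite -(gvalP k) -nrm2_norm H rmorphXn rmorph_nat.
have H2 : `|\sum_(a < N) expj (Pp phi a - Pp th a)| = (N%:R : C).
  by apply/eqP; rewrite -(eqrXn2 (n:=2)) ?normr_ge0 ?ler0n // H1.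
have := @normC_sum_eq1 _ 'I_N xpredT (fun a => expj (Pp phi a - Pp th a)).
rewrite H2 -(sum_norm_x phi th) => /(_ erefl (fun a _ => norm_expj _)).
case=> t _ ht.
have t1 : t = 1.
  by rewrite -(ht (Ordinal N_gt0) isT) /= !Pp0 subrr expj0.
apply/matrixP => a j; rewrite (ord1 j) !mxE.
have := ht a isT; rewrite t1 => ea.
change (expj (Pp phi a) = expj (Pp th a)).
by rewrite -[Pp phi a](subrK (Pp th a)) expjD ea mul1r.
Qed.

Lemma uc1 (phi th : R) (a : 'I_N) : steer N phi = steer N th ->
  htil (alpha *: steer N phi) a 0 * cconj (alpha *: steer N th) a 0 = 1.
Proof.
move=> E; rewrite ucE expjD -expjV.
have -> : expj (Pp phi a) = expj (Pp th a).
  by have := congr1 (fun M : 'cV[C]_N => M a 0) E; rewrite !mxE.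
by rewrite mulfV // expj_neq0.
Qed.

Lemma G_th (k : 'I_N) (phi th : R) : steer N phi = steer N th ->
  nrm2 (gval k (alpha *: steer N phi) (alpha *: steer N th)) = N%:R ^+ 2.
Proof.
move=> E; apply: complexI; rewrite nrm2_norm gvalE.
under eq_bigr do rewrite uc1 //.
by rewrite sumr_const card_ord rmorphXn rmorph_nat normr_nat.
Qed.

Lemma S_th (k : 'I_N) (phi th : R) : steer N phi = steer N th ->
  \sum_(k' < N | k' != k) nrm2 (vval k (alpha *: steer N phi) (alpha *: steer N th) k') = 0.
Proof.
move=> E; apply: big1 => k' nk.
rewrite vvalE.
have -> : \sum_(a < N) htil (alpha *: steer N phi) a 0 *
    (om ^+ ((N - 1) * (a * (N - k)) + a * (N - k')) * cconj (alpha *: steer N th) a 0) =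
    \sum_(a < N) (om ^+ ((N - 1) * (N - k) + (N - k'))) ^+ a.
  apply: eq_bigr => a _; rewrite mulrCA uc1 // mulr1 -exprM; congr (_ ^+ _); lia.
rewrite sum_om; case: ifP => [hd|_]; last exact: nrm2_0.
have e := @D2 k k' (ltn_ord k) (ltn_ord k') hd.
by move: nk; rewrite (val_inj e) eqxx.
Qed.

Lemma nrm2_alpha_gt0 : 0 < nrm2 alpha.
Proof.
by rewrite -ltcR nrm2_norm exprn_gt0 // normr_gt0.
Qed.

Lemma noise_sum (phi : R) :
  \sum_a nrm2 (htil (alpha *: steer N phi) a 0) = N%:R * (nrm2 alpha)^-1.
Proof.
have e (a : 'I_N) : nrm2 (htil (alpha *: steer N phi) a 0) = (nrm2 alpha)^-1.
  apply: complexI; rewrite -zzE uuE zzE fmorphV //.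
by under eq_bigr do rewrite e; rewrite sumr_const card_ord mulr_natl.
Qed.

End Basic.

Theorem lemma3 (R : realType) (N : nat) (k : 'I_N) (pt sigma2 : R)
    (alpha : R[i]) (thk : R) :
  (2 <= N)%N -> 0 < pt -> 0 < sigma2 -> alpha != 0 ->
  0 <= thk < 2 * pi ->
  let hk : 'cV[R[i]]_N := alpha *: steer N thk in
  let gam (phi : R) : R := sinr k pt sigma2 (alpha *: steer N phi) hk in
  (exists phi : R, - pi <= phi < pi /\
      (forall psi : R, - pi <= psi < pi -> gam psi <= gam phi)) /\
  (forall phis : R, - pi <= phis < pi ->
      (forall psi : R, - pi <= psi < pi -> gam psi <= gam phis) ->
      steer N phis = steer N thk).
Proof.
move=> hN hpt hs ha /andP[th0 th2] hk gam.
have N0 : (0 < N)%N by apply: leq_trans hN.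
pose p := pt / N%:R.
pose K := sigma2 * (N%:R * (nrm2 _ alpha)^-1).
pose M : R := N%:R ^+ 2.
have p0 : 0 < p by apply: divr_gt0 => //; rewrite ltr0n.
have K0 : 0 < K.
  apply: mulr_gt0 => //; apply: mulr_gt0; first by rewrite ltr0n.
  by rewrite invr_gt0 (nrm2_alpha_gt0 _ _ ha).
have M0 : 0 <= M by rewrite /M exprn_ge0 // ler0n.
have gamE phi : gam phi = p * nrm2 _ (gval k (alpha *: steer N phi) hk) /
    (p * \sum_(k' < N | k' != k) nrm2 _ (vval k (alpha *: steer N phi) hk k') + K).
  by rewrite /gam /sinr powPE (powIE _ _ N0) noise_sum.
have bound psi : gam psi <= p * M / K.
  rewrite gamE; apply: frac_le => //.
    by apply: sumr_ge0 => i _; apply: nrm2_ge0.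
  exact: (G_le _ _ N0 _ ha).
have val0 phi : steer N phi = steer N thk -> gam phi = p * M / K.
  by move=> E; rewrite gamE /hk (G_th _ _ N0 _ ha) // (S_th _ _ N0 _ ha) // mulr0 add0r.
pose phi0 := if thk < pi then thk else thk - 2 * pi.
have st0 : steer N phi0 = steer N thk.
  rewrite /phi0; case: ifP => // _.
  apply/matrixP => a j; rewrite !mxE; congr (expj (_ * _)).
  by rewrite -(sinD2pi (thk - 2 * pi)) mulr_natl subrK.
split.
  exists phi0; split.
    rewrite /phi0; case: ifP => h.
      by apply/andP; split => //; apply: le_trans th0; rewrite oppr_le0 pi_ge0.
    have := pi_gt0 R; move: h => /negbT; rewrite -leNgt => h h'.
    by apply/andP; split; lra.
  by move=> psi _; rewrite (val0 phi0 st0) bound.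
move=> phis hphis hmax.
apply: (G_eq _ _ N0 _ ha k).
apply: (@frac_eq _ p K (\sum_(k' < N | k' != k) nrm2 _ (vval k (alpha *: steer N phis) hk k'))) => //.
- by apply: sumr_ge0 => i _; apply: nrm2_ge0.
- exact: (G_le _ _ N0 _ ha).
- rewrite -gamE -(val0 phi0 st0); apply: hmax.
  rewrite /phi0; case: ifP => h.
    by apply/andP; split => //; apply: le_trans th0; rewrite oppr_le0 pi_ge0.
  have := pi_gt0 R; move: h => /negbT; rewrite -leNgt => h h'.
  by apply/andP; split; lra.
Qed.
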